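(* Let $G$ be a finite group, let $\Pi$ be the set of prime divisors of $|G|$, and let $\mathrm{GKC}(G)$ be the Gruenberg--Kegel complex of $G$. Then: (i) the $1$-skeleton of $\mathrm{GKC}(G)$ is the Gruenberg--Kegel graph of $G$; (ii) if $G$ is nilpotent, then $\mathrm{GKC}(G)$ is a simplex, i.e. $\Pi$ itself is a simplex of $\mathrm{GKC}(G)$; (iii) there is a positive integer $d(G)$ such that, for positive integers $n$, $\mathrm{GKC}(G^n)$ is a simplex if and only if $n\ge d(G)$, where $G^n$ is the direct product of $n$ copies of $G$.
   Context: The Gruenberg--Kegel complex $\mathrm{GKC}(G)$ of a finite group $G$ has vertex set $\Pi$, the set of prime divisors of $|G|$, and a subset $\Gamma\subseteq\Pi$ is a simplex if and only if $G$ contains an element whose order is the product of the primes in $\Gamma$. The Gruenberg--Kegel graph of $G$ has vertex set $\Pi$, with distinct primes $p,q$ adjacent if $G$ contains an element of order $pq$. The $1$-skeleton of a simplicial complex is the graph formed by its simplices of cardinality at most $2$. A complex is called a simplex if its whole vertex set is one of its simplices. *)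

(* Defs.v *)
From mathcomp Require Import all_boot all_fingroup all_solvable.
Set Implicit Arguments. Unset Strict Implicit. Unset Printing Implicit Defensive.
Local Open Scope group_scope.

Definition GKvertices (gT : finGroupType) (G : {set gT}) : seq nat :=
  primes #|G|.

Definition GKC_simplex (gT : finGroupType) (G : {set gT}) (s : seq nat) : bool :=
  [&& uniq s, all (fun p => p \in GKvertices G) s &
      [exists x in G, #[x] == \prod_(p <- s) p]%N].

Definition GKC_skel_vertex (gT : finGroupType) (G : {set gT}) (p : nat) : bool :=
  GKC_simplex G [:: p].
Definition GKC_skel_edge (gT : finGroupType) (G : {set gT}) (p q : nat) : bool :=
  GKC_simplex G [:: p; q].

Definition GKgraph_edge (gT : finGroupType) (G : {set gT}) (p q : nat) : bool :=
  [&& p \in GKvertices G, q \in GKvertices G, p != q &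
      [exists x in G, #[x] == p * q]%N].

Definition GKC_is_simplex (gT : finGroupType) (G : {set gT}) : bool :=
  GKC_simplex G (GKvertices G).

Definition powG (gT : finGroupType) (G : {group gT}) (n : nat)
  : {group {dffun forall i : 'I_n, (fun _ : 'I_n => gT) i}} :=
  setXn_group (fun _ : 'I_n => G).

(* Main.v *)
Require Import Defs.
From mathcomp Require Import all_boot all_fingroup all_solvable.
Set Implicit Arguments. Unset Strict Implicit. Unset Printing Implicit Defensive.

Local Open Scope group_scope.

Lemma prod_primes_dvd (s : seq nat) n : uniq s -> all prime s ->
  (forall p, p \in s -> p %| n)%N -> (\prod_(p <- s) p %| n)%N.
Proof.
elim: s => [|p s IH] /=; first by rewrite big_nil dvd1n.
case/andP=> ps us /andP[pp ap] H.
rewrite big_cons Gauss_dvd; last first.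
  rewrite big_seq (@big_ind _ (coprime p)) //; first exact: coprimen1.
    by move=> a b; rewrite coprimeMr => -> ->.
  move=> q qs; have qp : prime q by apply: (allP ap).
  rewrite prime_coprime // dvdn_prime2 //.
  by apply: contraNneq ps => ->.
rewrite H ?inE ?eqxx //=; apply: IH => // q qs; apply: H; by rewrite inE qs orbT.
Qed.

Lemma dvd_prod_mem (s : seq nat) p : p \in s -> (p %| \prod_(q <- s) q)%N.
Proof. by move=> ps; rewrite (big_rem p) //= dvdn_mulr. Qed.

Lemma simplexE (hT : finGroupType) (H : {set hT}) :
  GKC_is_simplex H = [exists x in H, #[x] == \prod_(p <- primes #|H|) p]%N.
Proof.
by rewrite /GKC_is_simplex /GKC_simplex /GKvertices primes_uniq /=;
  rewrite (introT allP) // => p.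
Qed.

Section Pow.
Variables (I : finType) (hT : finGroupType).
Implicit Types x : {dffun forall i : I, (fun _ : I => hT) i}.

Lemma expg_ffun x k i : (x ^+ k) i = (x i) ^+ k.
Proof. elim: k => [|k IH]; by rewrite ?expg0 ?oneg_ffun // !expgS mulg_ffun IH. Qed.

Lemma order_dvdn_ffun x m : (#[x] %| m)%N = [forall i, #[x i] %| m]%N.
Proof.
rewrite order_dvdn; apply/eqP/forallP => [H i|H].
  by rewrite order_dvdn -expg_ffun H oneg_ffun.
by apply/ffunP => i; rewrite expg_ffun oneg_ffun; apply/eqP; rewrite -order_dvdn.
Qed.
End Pow.

Lemma card_powG (gT : finGroupType) (G : {group gT}) n : #|powG G n| = (#|G| ^ n)%N.
Proof. by rewrite /powG /= cardsXn prod_nat_const card_ord. Qed.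

Lemma primes_powG (gT : finGroupType) (G : {group gT}) n : (0 < n)%N ->
  primes #|powG G n| = primes #|G|.
Proof. by move=> n0; rewrite card_powG primesX. Qed.

Lemma powG_mono (gT : finGroupType) (G : {group gT}) n : (0 < n)%N ->
  GKC_is_simplex (powG G n) -> GKC_is_simplex (powG G n.+1).
Proof.
move=> n0; rewrite !simplexE !primes_powG //.
case/exists_inP=> f fG /eqP of_.
pose g : {dffun forall i : 'I_n.+1, (fun _ => gT) i} :=
  [ffun i => match unlift ord_max i with Some j => f j | None => 1 end].
apply/exists_inP; exists g.
  apply/setXnP => i; rewrite ffunE; case: unlift => [j|]; last exact: group1.
  by move/setXnP: fG; apply.
rewrite -of_; apply/eqP; apply/eqP; rewrite eqn_dvd; apply/andP; split.
  rewrite order_dvdn_ffun; apply/forallP => i; rewrite ffunE.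
  case: unlift => [j|]; last by rewrite order1 dvd1n.
  by move: (dvdnn #[f]); rewrite order_dvdn_ffun => /forallP; apply.
rewrite order_dvdn_ffun; apply/forallP => j.
move: (dvdnn #[g]); rewrite order_dvdn_ffun => /forallP/(_ (lift ord_max j)).
by rewrite ffunE liftK.
Qed.

Lemma powG_big (gT : finGroupType) (G : {group gT}) :
  GKC_is_simplex (powG G (size (primes #|G|)).+1).
Proof.
set k := size (primes #|G|); set ps := primes #|G|.
rewrite simplexE primes_powG //.
pose xp p := odflt 1 [pick x in G | #[x] == p]%N.
have xpG p : xp p \in G by rewrite /xp; case: pickP => [x /andP[]|] //= _; exact: group1.
have xpo p : p \in ps -> #[xp p] = p.
  move=> pps; rewrite /xp; case: pickP => [x /andP[_ /eqP]|] //= H.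
  move: pps; rewrite mem_primes => /and3P[pp _ pd].
  have [x xG ox] := Cauchy pp pd.
  by move: (H x); rewrite xG ox eqxx.
pose f : {dffun forall i : 'I_k.+1, (fun _ => gT) i} :=
  [ffun i : 'I_k.+1 => if (i < k)%N then xp (nth 0%N ps i) else 1].
apply/exists_inP; exists f.
  by apply/setXnP => i; rewrite ffunE; case: ifP => _; [exact: xpG | exact: group1].
rewrite eqn_dvd; apply/andP; split.
  rewrite order_dvdn_ffun; apply/forallP => i; rewrite ffunE.
  case: ifP => ik; last by rewrite order1 dvd1n.
  by rewrite xpo ?mem_nth // dvd_prod_mem ?mem_nth.
apply: prod_primes_dvd; first exact: primes_uniq.
  by apply/allP => p; rewrite mem_primes => /andP[].
move=> p pps.
have ik : (index p ps < k.+1)%N by rewrite ltnS ltnW // index_mem.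
move: (dvdnn #[f]); rewrite order_dvdn_ffun => /forallP/(_ (Ordinal ik)).
by rewrite ffunE /= index_mem pps nth_index // xpo.
Qed.

Theorem mainTheorem5 (gT : finGroupType) (G : {group gT}) :
  [/\ (* (i) the 1-skeleton of GKC(G) is the Gruenberg--Kegel graph *)
      (forall p : nat, GKC_skel_vertex G p = (p \in GKvertices G))
      /\ (forall p q : nat, p != q -> GKC_skel_edge G p q = GKgraph_edge G p q),
      (* (ii) nilpotent groups have a simplex as GKC *)
      nilpotent G -> GKC_is_simplex G &
      (* (iii) *)
      exists d : nat, (0 < d)%N /\
        forall n : nat, (0 < n)%N -> (GKC_is_simplex (powG G n) <-> (d <= n)%N)].
Proof.
split.
- split.
    move=> p; rewrite /GKC_skel_vertex /GKC_simplex /= big_seq1 andbT.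
    case: (boolP (p \in GKvertices G)) => //= Hp.
    move: Hp; rewrite /GKvertices mem_primes => /and3P[pp _ pd].
    have [x xG ox] := Cauchy pp pd.
    by apply/exists_inP; exists x; rewrite ?ox.
  move=> p q pq; rewrite /GKC_skel_edge /GKC_simplex /GKgraph_edge /=.
  rewrite big_cons big_seq1 inE pq andbT /=.
  by case: (p \in _); case: (q \in _).
- move=> nG; rewrite simplexE.
  have [x xG ex] := exponent_witness nG.
  set r := (\prod_(p <- primes #|G|) p)%N.
  have rd : (r %| #[x])%N.
    apply: prod_primes_dvd; first exact: primes_uniq.
      by apply/allP => p; rewrite mem_primes => /andP[].
    move=> p pG.
    have : p \in \pi(#[x]) by rewrite -ex pi_of_exponent.
    by rewrite mem_primes => /and3P[].
  apply/exists_inP; exists (x ^+ (#[x] %/ r)); first exact: groupX.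
  rewrite orderXdiv; last by rewrite dvdn_div.
  by rewrite divnA // mulKn.
- pose P n := (0 < n)%N && GKC_is_simplex (powG G n).
  have exP : exists n, P n by exists (size (primes #|G|)).+1; rewrite /P powG_big.
  exists (ex_minn exP); case: ex_minnP => d /andP[d0 Pd] dmin.
  split => // n n0; split.
    by move=> Hn; apply: dmin; rewrite /P n0.
  move=> dn; rewrite -(subnK dn); elim: (n - d) => [|m IH] //=.
  by rewrite addSn; apply: powG_mono => //; rewrite addn_gt0 d0 orbT.
Qed.
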